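(* Let $G$ and $H$ be graphs on the same finite vertex set $V$. If $\mathcal R_0(G)=\mathcal R_0(H)$, then $G=H$.
   Context: A graph means a finite simple graph in which loops are allowed, with adjacency matrix $A$ over $\mathbf F_2$ ($A_{vv}=1$ iff $v$ has a loop). Let $\mathcal V$ be the $\mathbf F_2$-vector space with basis $V$ and $\mathcal E(x,y)=x^TAy$; for $W\subseteq V$, $\langle W\rangle$ is its span and $\langle W\rangle^{\perp\mathcal E}=\{x:\mathcal E(x,w)=0\ \forall w\in\langle W\rangle\}$. $W$ is reducible in $G$ if $\langle W\rangle+\langle W\rangle^{\perp\mathcal E}=\mathcal V$. The nullity of $W$ in $G$ is $|W|$ minus the $\mathbf F_2$-rank of the principal submatrix $A_{W,W}$. The pivotal poset $\mathcal R_0(G)$ is the collection of subsets $W\subseteq V$ that are reducible in $G$ and have nullity $0$ (equivalently, the subsets $W$ with $A_{W,W}$ invertible over $\mathbf F_2$; the empty set is included). *)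

(* Defs.v *)
From HB Require Import structures.
From mathcomp Require Import all_boot all_order all_algebra.
Set Implicit Arguments. Unset Strict Implicit. Unset Printing Implicit Defensive.
Import GRing.Theory.
Local Open Scope ring_scope.

Section Pivotal.
Variable V : finType.

(* A graph on V (loops allowed, no multi-edges) is a symmetric relation e.
   Its adjacency matrix over F_2: A u v = 1 iff e u v (A v v = 1 iff loop at v). *)
Definition graph_sym (e : rel V) : Prop := symmetric e.

Definition adj (e : rel V) (u v : V) : 'F_2 := (e u v)%:R.

(* The F_2-vector space with basis V: functions V -> F_2 (basis vector of v = indicator of v). *)
Notation vec := {ffun V -> 'F_2}.

Definition bilE (e : rel V) (x y : vec) : 'F_2 :=
  \sum_(u : V) \sum_(v : V) x u * adj e u v * y v.

Definition in_span (W : {set V}) (x : vec) : Prop :=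
  exists c : V -> 'F_2, x = [ffun v => \sum_(w in W) c w * (w == v)%:R].

Definition in_perp (e : rel V) (W : {set V}) (x : vec) : Prop :=
  forall w : vec, in_span W w -> bilE e x w = 0.

Definition reducible (e : rel V) (W : {set V}) : Prop :=
  forall z : vec, exists x y : vec, [/\ in_span W x, in_perp e W y & z = x + y].

Definition principal_submx (e : rel V) (W : {set V}) : 'M['F_2]_#|W| :=
  \matrix_(i, j) adj e (enum_val i) (enum_val j).

Definition nullity (e : rel V) (W : {set V}) : nat :=
  (#|W| - \rank (principal_submx e W))%N.

Definition in_R0 (e : rel V) (W : {set V}) : Prop :=
  reducible e W /\ nullity e W = 0%N.

End Pivotal.

(* Main.v *)
Require Import Defs.
From HB Require Import structures.
From mathcomp Require Import all_boot all_order all_algebra.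
Set Implicit Arguments. Unset Strict Implicit. Unset Printing Implicit Defensive.
Import GRing.Theory.

Section Aux.
Local Open Scope ring_scope.
Variable V : finType.
Notation vec := {ffun V -> 'F_2}.

Lemma det2 (R: comNzRingType) (A : 'M[R]_2) : \det A = A 0 0 * A 1 1 - A 0 1 * A 1 0.
Proof.
rewrite (expand_det_row _ 0) !big_ord_recl big_ord0 /cofactor !det_mx11 !mxE /=.
rewrite expr0 expr1 mul1r mulN1r addr0 mulrN.
by congr (A _ _ * A _ _ - A _ _ * A _ _); apply/val_inj.
Qed.

Lemma spanE (W : {set V}) (c : V -> 'F_2) v :
  [ffun v => \sum_(w in W) c w * (w == v)%:R] v = if v \in W then c v else 0.
Proof.
rewrite ffunE; case: ifP => vW.
  rewrite (bigD1 v) //= eqxx mulr1 big1 ?addr0 // => w /andP[_ /negbTE ->].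
  by rewrite mulr0.
rewrite big1 // => w wW; case: eqP => [ew|_]; last by rewrite mulr0.
by rewrite -ew wW in vW.
Qed.

Lemma bilE_span e (W : {set V}) (y : vec) (d : V -> 'F_2) :
  bilE e y [ffun v => \sum_(w in W) d w * (w == v)%:R]
  = \sum_(v in W) (\sum_u y u * adj e u v) * d v.
Proof.
rewrite /bilE exchange_big /= (bigID (mem W)) /= [X in _ + X]big1 ?addr0.
  apply: eq_bigr => v vW; rewrite spanE vW mulr_suml.
  by apply: eq_bigr.
move=> v vW; rewrite spanE (negbTE vW); apply: big1 => u _; by rewrite mulr0.
Qed.

Lemma sum_delta (a : V) (f : V -> 'F_2) : \sum_u (a == u)%:R * f u = f a.
Proof.
rewrite (bigD1 a) //= eqxx mul1r big1 ?addr0 // => u /negbTE.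
by rewrite eq_sym => ->; rewrite mul0r.
Qed.

Lemma unit_reducible e (W : {set V}) :
  principal_submx e W \in unitmx -> reducible e W.
Proof.
move=> uM z.
set M := principal_submx e W.
pose r := \row_(j < #|W|) \sum_u z u * adj e u (enum_val j).
pose c' := r *m invmx M.
pose c w := \sum_(i < #|W|) c' 0 i * (enum_val i == w)%:R.
pose x : vec := [ffun v => \sum_(w in W) c w * (w == v)%:R].
exists x, (z - x); split; first by exists c.
  2: by rewrite addrC subrK.
move=> w [d ->]; rewrite bilE_span big1 // => v vW.
have -> : \sum_u (z - x) u * adj e u v = 0; last by rewrite mul0r.
rewrite -(enum_rankK_in vW vW); set j := enum_rank_in vW v.
have : (c' *m M) 0 j = r 0 j by rewrite /c' mulmxKV.
rewrite !mxE => h.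
have xc : forall u, x u = c u.
  move=> u; rewrite /x spanE; case: ifP => // uW.
  rewrite /c big1 // => i _; case: eqP => [ei|_]; last by rewrite mulr0.
  by move: (enum_valP i); rewrite ei /= uW.
have -> : \sum_u (z - x) u * adj e u (enum_val j)
   = \sum_u z u * adj e u (enum_val j) - \sum_u c u * adj e u (enum_val j).
  rewrite -sumrB; apply: eq_bigr => u _; by rewrite -xc -mulrBl !ffunE.
apply/eqP; rewrite subr_eq0; apply/eqP.
etransitivity; first by symmetry; exact: h.
symmetry; rewrite /c; under eq_bigr do rewrite mulr_suml.
rewrite exchange_big /=; apply: eq_bigr => i _.
rewrite (bigD1 (enum_val i)) //= eqxx mulr1 big1 ?addr0.
  by rewrite /M /principal_submx; congr (_ * _); symmetry; exact: mxE.
by move=> u /negbTE; rewrite eq_sym => ->; rewrite mulr0 mul0r.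
Qed.

Lemma R0_unit e (W : {set V}) : in_R0 e W <-> principal_submx e W \in unitmx.
Proof.
split.
  move=> [_]; rewrite /nullity => /eqP; rewrite subn_eq0 => h.
  rewrite -row_free_unit /row_free eqn_leq h andbT.
  exact: rank_leq_row.
move=> u; split; first exact: unit_reducible.
by move: u; rewrite -row_free_unit /row_free /nullity => /eqP ->; rewrite subnn.
Qed.

Lemma det1 n (f : 'I_n -> V) (g : V -> V -> 'F_2) a :
  n = 1%N -> (forall i, f i = a) ->
  \det (\matrix_(i, j) g (f i) (f j) : 'M_n) = g a a.
Proof. by move=> hn hf; subst n; rewrite det_mx11 mxE !hf. Qed.

Lemma det2' n (f : 'I_n -> V) (g : V -> V -> 'F_2) a b :
  n = 2%N -> injective f -> (forall i, f i = a \/ f i = b) ->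
  \det (\matrix_(i, j) g (f i) (f j) : 'M_n) = g a a * g b b - g a b * g b a.
Proof.
move=> hn fi hf; subst n; rewrite det2 !mxE.
have n01 : f 0 != f 1 by apply/eqP => /fi.
case: (hf 0) => e0; case: (hf 1) => e1; rewrite e0 e1 in n01 *;
  rewrite ?eqxx // in n01.
by rewrite mulrC [g b a * _]mulrC.
Qed.

Lemma unit1 (e : rel V) v : (principal_submx e [set v] \in unitmx) = e v v.
Proof.
rewrite /principal_submx unitmxE unitfE (det1 _ _ (a:=v)) ?cards1 //.
  by rewrite /adj; case: (e v v).
by move=> i; apply/set1P; exact: (enum_valP i).
Qed.

Lemma unit2 (e : rel V) u v : u != v ->
  (principal_submx e [set u; v] \in unitmx) =
  ((e u u)%:R * (e v v)%:R - (e u v)%:R * (e v u)%:R != (0 : 'F_2)).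
Proof.
move=> uv; rewrite /principal_submx unitmxE unitfE (det2' _ _ (a:=u) (b:=v)) //.
- by rewrite cards2 uv.
- exact: enum_val_inj.
by move=> i; move: (enum_valP i); rewrite in_set2 => /orP[] /eqP; [left|right].
Qed.

End Aux.

Theorem mainTheorem7 (V : finType) (eG eH : rel V) :
  graph_sym eG -> graph_sym eH ->
  (forall W : {set V}, in_R0 eG W <-> in_R0 eH W) ->
  eG =2 eH.
Proof.
move=> sG sH h.
have hu : forall W, (principal_submx eG W \in unitmx) = (principal_submx eH W \in unitmx).
  move=> W; apply/idP/idP => H.
    by apply/(R0_unit eH W); apply/h; apply/(R0_unit eG W).
  by apply/(R0_unit eG W); apply/h; apply/(R0_unit eH W).
have loop : forall v, eG v v = eH v v by move=> v; rewrite -!unit1 hu.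
move=> u v; case: (eqVneq u v) => [->|uv]; first exact: loop.
move: (hu [set u; v]); rewrite !unit2 // -!loop (sG v u) (sH v u).
by case: (eG u u); case: (eG v v); case: (eG u v); case: (eH u v).
Qed.
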